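(* Let $A_1,A_2\in\mathbb{R}^{2\times2}$ be such that $\det[A_1,A_2]=0$ and $A_1-A_2$ is invertible, and suppose $A_1$ has non-real eigenvalues. Then $A_2$ either has non-real eigenvalues or is a scalar matrix, and $B:=(A_1A_2+\mathbb{I})(A_1-A_2)^{-1}$ has complex conjugate eigenvalues (i.e. its spectrum is of the form $\{\mu,\overline{\mu}\}$).
   Context: $[A,B]=AB-BA$; $\mathbb{I}$ is the $2\times 2$ identity matrix. *)

(* Defs.v *)
From HB Require Import structures.
From mathcomp Require Import all_boot all_order all_algebra.
From mathcomp Require Import complex.
From mathcomp Require Import reals.
Set Implicit Arguments. Unset Strict Implicit. Unset Printing Implicit Defensive.
Import Order.TTheory GRing.Theory Num.Theory.
Local Open Scope ring_scope.

Definition mxC (R : realType) (A : 'M[R]_2) : 'M[R[i]]_2 :=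
  map_mx (fun x => (x%:C)%C) A.

Definition eigvalC (R : realType) (A : 'M[R]_2) (z : R[i]) : Prop :=
  eigenvalue (mxC A) z.

Definition has_nonreal_eigs (R : realType) (A : 'M[R]_2) : Prop :=
  forall z, eigvalC A z -> Im z != 0.

Definition commx (R : realType) (A B : 'M[R]_2) : 'M[R]_2 :=
  A *m B - B *m A.

(* Main.v *)
Require Import Defs.
From HB Require Import structures.
From mathcomp Require Import all_boot all_order all_algebra.
From mathcomp Require Import complex.
From mathcomp Require Import reals.
From mathcomp Require Import ring lra.
Import Order.TTheory GRing.Theory Num.Theory.
Local Open Scope ring_scope.

Lemma det2 (R : comNzRingType) (M : 'M[R]_2) : \det M = M 0 0 * M 1 1 - M 0 1 * M 1 0.
Proof.
rewrite (expand_det_row M 0) !big_ord_recl big_ord0 /cofactor !det_mx11 !mxE /=.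
rewrite addr0 expr0 expr1 !mul1r mulN1r mulrN.
congr (_ * _ - _ * _); rewrite /bump /=; congr (M _ _); exact: val_inj.
Qed.

Lemma eigP (F : fieldType) n (A : 'M[F]_n) a : eigenvalue A a <-> \det (A - a%:M) = 0.
Proof.
rewrite /eigenvalue /eigenspace kermx_eq0 row_free_unit unitmxE unitfE negbK.
by split => /eqP.
Qed.

Lemma mul2E (R : comNzRingType) (A B : 'M[R]_2) i j :
  (A *m B) i j = A i 0 * B 0 j + A i 1 * B 1 j.
Proof.
rewrite mxE !big_ord_recl big_ord0 addr0; congr (_ + A i _ * B _ j); exact: val_inj.
Qed.

Lemma sub2E (R : comNzRingType) (A B : 'M[R]_2) i j : (A - B) i j = A i j - B i j.
Proof. by rewrite !mxE. Qed.

Lemma add2E (R : comNzRingType) (A B : 'M[R]_2) i j : (A + B) i j = A i j + B i j.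
Proof. by rewrite !mxE. Qed.

Lemma ord2 (i : 'I_2) : i = 0 \/ i = 1.
Proof. case: i => [[|[|//]]] ?; [left|right]; exact: val_inj. Qed.

Section S.
Variable R : realType.

Lemma eigC2 (A : 'M[R]_2) z : eigvalC A z <->
  z ^+ 2 - ((A 0 0 + A 1 1)%:C)%C * z + ((A 0 0 * A 1 1 - A 0 1 * A 1 0)%:C)%C = 0.
Proof.
rewrite /eigvalC eigP det2 !mxE /=.
rewrite !rmorphB !rmorphD !rmorphM.
by split => <-; ring.
Qed.

Lemma eigB (M N : 'M[R]_2) z : N \in unitmx -> eigvalC (M *m invmx N) z <->
  \det (mxC M - z *: mxC N) = 0.
Proof.
move=> hN.
have hNc : mxC N \in unitmx by rewrite /mxC map_unitmx.
rewrite /eigvalC eigP.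
have -> : mxC (M *m invmx N) - z%:M = (mxC M - z *: mxC N) *m invmx (mxC N).
  rewrite mulmxBl -scalemxAl mulmxV // scalemx1 /mxC map_mxM map_invmx //.
rewrite det_mulmx det_inv; split; last by move=> ->; rewrite mul0r.
move/eqP; rewrite mulf_eq0 invr_eq0 => /orP [/eqP //|].
by move: hNc; rewrite unitmxE unitfE => /negPf ->.
Qed.

Lemma quad (c2 K c0 : R) : c2 != 0 -> K ^+ 2 - 4 * c2 * c0 <= 0 ->
  exists mu : R[i], forall z : R[i],
   (c2%:C)%C * z ^+ 2 - (K%:C)%C * z + (c0%:C)%C = 0 <-> (z = mu \/ z = (mu^*)%C).
Proof.
move=> hc hD.
set s := Num.sqrt (4 * c2 * c0 - K ^+ 2).
have hs : s ^+ 2 = 4 * c2 * c0 - K ^+ 2 by rewrite sqr_sqrtr // subr_ge0 -subr_le0.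
exists ((K / (2 * c2)) +i* (s / (2 * c2)))%C => z.
have -> : (c2%:C)%C * z ^+ 2 - (K%:C)%C * z + (c0%:C)%C =
   (c2%:C)%C * ((z - ((K / (2 * c2)) +i* (s / (2 * c2)))%C) * (z - ((K / (2 * c2)) +i* (s / (2 * c2)))^*%C)).
  case: z => x y; rewrite expr2 /=; apply/eqP; rewrite eq_complex /=; apply/andP; split; apply/eqP.
    have hc0 : c0 = (s ^+ 2 + K ^+ 2) / (4 * c2).
      by rewrite hs; field; rewrite ?mulf_eq0 ?negb_or ?hc ?pnatr_eq0.
    rewrite hc0; field.
    by rewrite ?mulf_eq0 ?negb_or ?hc ?pnatr_eq0.
  field; by rewrite ?mulf_eq0 ?negb_or ?hc ?pnatr_eq0.
have hc' : (c2%:C)%C != 0 :> R[i] by rewrite fmorph_eq0.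
split.
  move/eqP; rewrite mulf_eq0 (negPf hc') /= mulf_eq0 !subr_eq0.
  by move=> /orP [/eqP ->|/eqP ->]; [left|right].
by case=> ->; rewrite subrr ?mul0r ?mulr0.
Qed.
Lemma disc_core (a b c d e f g h al be : R) : f = be*b -> g = be*c -> e = al+be*a -> h = al+be*d ->
  let p00 := a*e+b*g+1 in let p01 := a*f+b*h in let p10 := c*e+d*g in let p11 := c*f+d*h+1 in
  let n00 := a-e in let n01 := b-f in let n10 := c-g in let n11 := d-h in
  (p00 * n11 + p11 * n00 - p01 * n10 - p10 * n01) ^+ 2 - 4 * (n00 * n11 - n01 * n10) * (p00 * p11 - p01 * p10)
  = ((a - d) ^+ 2 + 4 * b * c) * (be * (1 - be) * (a * d - b * c) - al * be * (a + d) - al ^+ 2 - (1 - be)) ^+ 2.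
Proof. move=> -> -> -> -> /=. ring. Qed.

Lemma detq (M N : 'M[R]_2) (z : R[i]) : \det (mxC M - z *: mxC N) =
  ((N 0 0 * N 1 1 - N 0 1 * N 1 0)%:C)%C * z ^+ 2
  - ((M 0 0 * N 1 1 + M 1 1 * N 0 0 - M 0 1 * N 1 0 - M 1 0 * N 0 1)%:C)%C * z
  + ((M 0 0 * M 1 1 - M 0 1 * M 1 0)%:C)%C.
Proof.
rewrite det2 !mxE !rmorphB !rmorphD !rmorphM; ring.
Qed.

Lemma hb0 (a b c d : R) : (a - d) ^+ 2 + 4 * b * c < 0 -> b != 0.
Proof. move=> h; apply/eqP => hb; by move: h; rewrite hb mulr0 mul0r addr0 ltNge sqr_ge0. Qed.

Lemma lemma2p9_aux (A1 A2 : 'M[R]_2) :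
  \det (commx A1 A2) = 0 ->
  A1 - A2 \in unitmx ->
  has_nonreal_eigs A1 ->
  (has_nonreal_eigs A2 \/ is_scalar_mx A2) /\
  (exists mu : R[i], forall z : R[i],
     eigvalC ((A1 *m A2 + 1%:M) *m invmx (A1 - A2)) z <->
     (z = mu \/ z = (mu^*)%C)).
Proof.
move=> hC hU hE.
have hD1 : (A1 0 0 - A1 1 1) ^+ 2 + 4 * A1 0 1 * A1 1 0 < 0.
  rewrite ltNge; apply/negP => hD.
  set D := (A1 0 0 - A1 1 1) ^+ 2 + 4 * A1 0 1 * A1 1 0 in hD.
  have hs : Num.sqrt D ^+ 2 = D by rewrite sqr_sqrtr.
  set s := Num.sqrt D in hs.
  have hz : eigvalC A1 (((A1 0 0 + A1 1 1 + s) / 2)%:C)%C.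
    apply/eigC2.
    rewrite -rmorphXn -rmorphM -rmorphB -rmorphD.
    apply/eqP; rewrite fmorph_eq0; apply/eqP.
    move: hs; rewrite /D; nra.
  by move: (hE _ hz); rewrite -complexIm /= rmorph0 eqxx.
rewrite /commx det2 !sub2E !mul2E in hC.
set a := A1 0 0 in hC hD1 *; set b := A1 0 1 in hC hD1 *.
set c := A1 1 0 in hC hD1 *; set d := A1 1 1 in hC hD1 *.
set e := A2 0 0 in hC *; set f := A2 0 1 in hC *.
set g := A2 1 0 in hC *; set h := A2 1 1 in hC *.
have hb : b != 0 := hb0 _ _ _ _ hD1.
set P := b * (e - h) - f * (a - d).
set Q := b * g - f * c.
have hC' : - (2 * b * Q + (a - d) * P) ^+ 2 + P ^+ 2 * ((a - d) ^+ 2 + 4 * b * c) = 0.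
  rewrite -[RHS](mulr0 (4 * b ^+ 2)) -[in RHS]hC /P /Q; ring.
have hP2 : P ^+ 2 <= 0.
  rewrite -(nmulr_lge0 _ hD1).
  have := sqr_ge0 (2 * b * Q + (a - d) * P); lra.
have hP : P = 0 by apply/eqP; rewrite -sqrf_eq0 eq_le hP2 sqr_ge0.
have hQ2 : (2 * b * Q) ^+ 2 = 0.
  by apply/eqP; rewrite -oppr_eq0; apply/eqP; rewrite -hC' hP; ring.
have hQ : Q = 0.
  move/eqP: hQ2; rewrite sqrf_eq0 !mulf_eq0 (negPf hb) pnatr_eq0 /=.
  by move/eqP.
have E1 : b * (e - h) = f * (a - d) by apply: subr0_eq.
have E2 : b * g = f * c by apply: subr0_eq.
clear hC' hP2 hQ2.
split.
  have [hf|hf] := eqVneq f 0.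
    right.
    have hg : g = 0.
      by apply/eqP; move: E2; rewrite hf mul0r => /eqP; rewrite mulf_eq0 (negPf hb).
    have heh : h = e.
      by apply/esym/eqP; rewrite -subr_eq0; move: E1; rewrite hf mul0r => /eqP; rewrite mulf_eq0 (negPf hb).
    apply/is_scalar_mxP; exists e; apply/matrixP => i j; rewrite mxE.
    by case: (ord2 i) => ->; case: (ord2 j) => ->; rewrite /= ?mulr1n ?mulr0n -?/e -?/f -?/g -?/h ?hf ?hg ?heh.
  left.
  move=> z /eigC2 hz; apply/negP => /eqP hIm.
  have hz' : z = ((complex.Re z)%:C)%C.
    move: hIm; rewrite -complexIm; case: z {hz} => x y /= /eqP.
    by rewrite fmorph_eq0 => /eqP ->.
  move: hz; rewrite hz'; set x := complex.Re z.
  rewrite -rmorphXn -rmorphM -rmorphB -rmorphD => /eqP; rewrite fmorph_eq0 => /eqP hx.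
  rewrite -/e -/f -/g -/h in hx.
  have hD2 : b ^+ 2 * ((e - h) ^+ 2 + 4 * f * g) = f ^+ 2 * ((a - d) ^+ 2 + 4 * b * c).
    transitivity ((b * (e - h)) ^+ 2 + 4 * f * b * (b * g)); first ring.
    by rewrite E1 E2; ring.
  have hf2 : 0 < f ^+ 2 by rewrite lt_def sqrf_eq0 hf sqr_ge0.
  have hneg : b ^+ 2 * ((e - h) ^+ 2 + 4 * f * g) < 0 by rewrite hD2 pmulr_rlt0.
  have hx2 : (e - h) ^+ 2 + 4 * f * g = (2 * x - (e + h)) ^+ 2.
    rewrite -[LHS]addr0 -(mulr0 4) -hx; ring.
  move: hneg; rewrite hx2 ltNge mulr_ge0 ?sqr_ge0 //.
set M := A1 *m A2 + 1%:M.
set N := A1 - A2.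
have hM00 : M 0 0 = a * e + b * g + 1 by rewrite /M add2E mul2E mxE.
have hM01 : M 0 1 = a * f + b * h by rewrite /M add2E mul2E mxE /= mulr0n addr0.
have hM10 : M 1 0 = c * e + d * g by rewrite /M add2E mul2E mxE /= mulr0n addr0.
have hM11 : M 1 1 = c * f + d * h + 1 by rewrite /M add2E mul2E mxE.
have hN00 : N 0 0 = a - e by rewrite /N sub2E.
have hN01 : N 0 1 = b - f by rewrite /N sub2E.
have hN10 : N 1 0 = c - g by rewrite /N sub2E.
have hN11 : N 1 1 = d - h by rewrite /N sub2E.
have hN : N 0 0 * N 1 1 - N 0 1 * N 1 0 != 0.
  by move: hU; rewrite unitmxE unitfE det2.
have hdisc := @disc_core a b c d e f g h (e - f / b * a) (f / b).
rewrite /= in hdisc.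
move: hdisc; set S := (_ - (1 - f / b)).
move=> hdisc.
have hle : ((a * e + b * g + 1) * (d - h) + (c * f + d * h + 1) * (a - e) -
     (a * f + b * h) * (c - g) - (c * e + d * g) * (b - f)) ^+ 2 -
    4 * ((a - e) * (d - h) - (b - f) * (c - g)) *
    ((a * e + b * g + 1) * (c * f + d * h + 1) -
     (a * f + b * h) * (c * e + d * g)) <= 0.
  rewrite hdisc.
  - by rewrite nmulr_rle0 // sqr_ge0.
  - by field.
  - by apply: (mulfI hb); rewrite E2; field.
  - by ring.
  - apply: (mulfI hb).
    have -> : b * (e - f / b * a + f / b * d) = b * e - f * (a - d) by field.
    by rewrite -E1; ring.
rewrite hN00 hN01 hN10 hN11 in hN.
have [mu hmu] := quad _ _ _ hN hle.
exists mu => z; rewrite eigB // detq hM00 hM01 hM10 hM11 hN00 hN01 hN10 hN11.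
exact: hmu.
Qed.
End S.

Theorem lemma2p9 (R : realType) (A1 A2 : 'M[R]_2) :
  \det (commx A1 A2) = 0 ->
  A1 - A2 \in unitmx ->
  has_nonreal_eigs A1 ->
  (has_nonreal_eigs A2 \/ is_scalar_mx A2) /\
  (exists mu : R[i], forall z : R[i],
     eigvalC ((A1 *m A2 + 1%:M) *m invmx (A1 - A2)) z <->
     (z = mu \/ z = (mu^*)%C)).
Proof. exact: lemma2p9_aux. Qed.
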